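(* Let $d\ge2$, $\kappa,l,\lambda>0$, $k\in\{0,1\}$, $\mu>0$, $\varphi_o>0$. Suppose $\varphi:[0,\infty)\to(0,\infty)$ is continuous with $\varphi(0)=\varphi_o$, $\lim_{u\to\infty}\varphi(u)=0$, and for all $u\ge0$ $$\int_{\varphi_o}^{\varphi(u)}\frac{d\bar\varphi}{\sqrt{\frac{d(d-1)}{\kappa^2l^2}\mu+k\frac{(d-1)^2}{4l^2}\bar\varphi^2+\lambda\bar\varphi^{\frac{2(d+1)}{d-1}}}}=-l\int_0^u\frac{d\bar u}{\sqrt{1+k\bar u^2+\mu\bar u^{d+1}}}$$ (i.e. the domain wall solution of the conformally coupled scalar with these parameters is regular, $u$ ranging over $[0,\infty)$). Then necessarily $$\lambda<\Big(\frac{(d-1)^d\kappa^2}{2^{d+1}d\,l^{d-1}}\Big)^{\frac2{d-1}}.$$ In particular no such regular solution exists for $d=2$ with $\sqrt\lambda=\kappa^2/(16l)$, nor for $d=3$ with $\lambda=\kappa^2/(6l^2)$. *)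

(* Defs.v *)
From Stdlib Require Import Reals.
From Coquelicot Require Export Coquelicot.
Export Reals.
Open Scope R_scope.

Definition lhs_integrand (d : nat) (kappa l lambda k mu : R) (phib : R) : R :=
  / sqrt (INR d * (INR d - 1) / (kappa ^ 2 * l ^ 2) * mu
          + k * ((INR d - 1) ^ 2 / (4 * l ^ 2)) * phib ^ 2
          + lambda * Rpower phib (2 * (INR d + 1) / (INR d - 1))).

Definition rhs_integrand (d : nat) (k mu : R) (ub : R) : R :=
  / sqrt (1 + k * ub ^ 2 + mu * ub ^ (d + 1)).

Definition lambda_crit (d : nat) (kappa l : R) : R :=
  Rpower ((INR d - 1) ^ d * kappa ^ 2 / (2 ^ (d + 1) * INR d * l ^ (d - 1)))
         (2 / (INR d - 1)).

(* Main.v *)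
Require Import Defs.
From Stdlib Require Import Reals Lra Lia.
From Coquelicot Require Import Coquelicot.
Open Scope R_scope.

Lemma exp_pow' x n : exp x ^ n = exp (INR n * x).
Proof.
  rewrite <- (exp_ln (exp x ^ n)) by (apply pow_lt, exp_pos).
  rewrite ln_pow by apply exp_pos. rewrite ln_exp. reflexivity.
Qed.

Ltac pos := repeat (apply Rmult_lt_0_compat || apply Rdiv_lt_0_compat || apply pow_lt || apply Rinv_0_lt_compat); lra.

Lemma INR2 : INR 2 = 2. Proof. simpl; ring. Qed.

Lemma key_alg d kappa l lambda k mu phib : (2<=d)%nat -> 0<kappa -> 0<l -> 0<=k -> 0<mu ->
  lambda_crit d kappa l <= lambda -> 0 < phib ->
  let D := INR d in let q := 2/(D-1) in let s := ln (4*D/((D-1)*kappa^2))/2 in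
  let v := exp (q*s - q*ln phib) in
  phib^2 * (1 + k*v^2 + mu*v^(d+1)) <=
  (l*q*v)^2 * (D*(D-1)/(kappa^2*l^2)*mu + k*((D-1)^2/(4*l^2))*phib^2
     + lambda*Rpower phib (2*(D+1)/(D-1))).
Proof.
  intros Hd Hk Hl Hk0 Hmu Hcrit Hp D q s v.
  assert (HD : 2 <= D) by (unfold D; replace 2 with (INR 2) by apply INR2; apply le_INR; lia).
  assert (HD1 : 0 < D - 1) by lra.
  assert (Ha2 : 0 < 4*D/((D-1)*kappa^2)).
  { apply Rdiv_lt_0_compat; [lra| apply Rmult_lt_0_compat; [lra | apply pow_lt; lra]]. }
  assert (Hs : exp (2*s) = 4*D/((D-1)*kappa^2)).
  { unfold s. replace (2 * (ln (4 * D / ((D - 1) * kappa ^ 2)) / 2)) with (ln (4 * D / ((D - 1) * kappa ^ 2))) by field.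
    apply exp_ln; auto. }
  assert (Hphi2 : phib^2 = exp (2 * ln phib)).
  { replace (2 * ln phib) with (INR 2 * ln phib) by (rewrite INR2; ring). rewrite <- exp_pow'. rewrite exp_ln; auto. }
  assert (HA : phib^2 * v^(d+1) = (4*D/((D-1)*kappa^2)) * v^2).
  { rewrite Hphi2, <- Hs. unfold v. rewrite !exp_pow', <- !exp_plus. f_equal.
    rewrite plus_INR, INR2. fold D. simpl (INR 1). unfold q. field. lra. }
  assert (HB : v^2 * Rpower phib (2*(D+1)/(D-1)) = exp (2*q*s) * phib^2).
  { rewrite Hphi2. unfold v, Rpower. rewrite !exp_pow', <- !exp_plus. f_equal.
    rewrite INR2. unfold q. field. lra. }
  assert (HC : (l*q)^2 * exp (2*q*s) * lambda_crit d kappa l = 1).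
  { unfold lambda_crit, Rpower. fold D. fold q.
    assert (Hlq : 0 < l*q) by (unfold q; apply Rmult_lt_0_compat; [lra| apply Rdiv_lt_0_compat; lra]).
    rewrite <- (exp_ln ((l*q)^2)) by (apply pow_lt; lra).
    rewrite <- !exp_plus. transitivity (exp 0); [|apply exp_0]. f_equal.
    assert (H2 : 0 < 2) by lra.
    assert (Hq : 0 < q) by (unfold q; pos).
    rewrite ln_pow by lra. rewrite ln_mult by lra.
    unfold q at 1. rewrite ln_div by lra.
    unfold s. rewrite !ln_div by pos.
    rewrite !ln_mult by pos.
    rewrite !ln_pow by lra.
    replace (ln 4) with (2 * ln 2).
    2:{ replace 4 with (2^2) by ring. rewrite ln_pow by lra. rewrite INR2; ring. }
    rewrite plus_INR, minus_INR by lia. rewrite INR2. fold D. simpl (INR 1). unfold q. field. lra. }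
  assert (Hq : 0 < q) by (unfold q; pos).
  assert (Hd' : (l*q)^2*(D*(D-1)/(kappa^2*l^2)) = 4*D/((D-1)*kappa^2)).
  { unfold q. field. split; lra. }
  assert (He : (l*q)^2*((D-1)^2/(4*l^2)) = 1).
  { unfold q. field. split; lra. }
  assert (Eq : (l*q*v)^2 * (D*(D-1)/(kappa^2*l^2)*mu + k*((D-1)^2/(4*l^2))*phib^2
     + lambda*Rpower phib (2*(D+1)/(D-1))) =
     mu*v^2*((l*q)^2*(D*(D-1)/(kappa^2*l^2))) + k*phib^2*v^2*((l*q)^2*((D-1)^2/(4*l^2)))
     + lambda*(l*q)^2*(v^2*Rpower phib (2*(D+1)/(D-1)))) by ring.
  rewrite Eq, Hd', He, HB.
  replace (phib^2 * (1 + k*v^2 + mu*v^(d+1))) with (phib^2 + k*phib^2*v^2 + mu*(phib^2*v^(d+1))) by ring.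
  rewrite HA.
  assert (HE : 0 < (l*q)^2 * exp (2*q*s)) by (apply Rmult_lt_0_compat; [apply pow_lt; pos | apply exp_pos]).
  assert (H1 : 1 <= lambda*((l*q)^2 * exp (2*q*s))) by nra.
  assert (H3 : 0 < phib^2) by (apply pow_lt; lra).
  nra.
Qed.

Lemma Q_pos d k mu x : 0 <= k -> 0 < mu -> 0 <= x -> 0 < 1 + k * x ^ 2 + mu * x ^ (d + 1).
Proof.
  intros. assert (0 <= x^2) by (apply pow_le; lra). assert (0 <= x^(d+1)) by (apply pow_le; lra).
  nra.
Qed.

Lemma rhs_gt0 d k mu x : 0 <= k -> 0 < mu -> 0 <= x -> 0 < rhs_integrand d k mu x.
Proof.
  intros. unfold rhs_integrand. apply Rinv_0_lt_compat, sqrt_lt_R0, Q_pos; auto.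
Qed.

Lemma rhs_cont d k mu x : 0 <= k -> 0 < mu -> 0 <= x -> continuous (rhs_integrand d k mu) x.
Proof.
  intros. 
  pose proof (Q_pos d k mu x H H0 H1).
  assert (ex_derive (rhs_integrand d k mu) x); [|exact (ex_derive_continuous _ _ H3)].
  unfold rhs_integrand.
  auto_derive. split. { simpl in *. nra. } split; auto.
  apply Rgt_not_eq, sqrt_lt_R0. simpl in *; nra.
Qed.

Lemma G_ex d k mu y : 0 <= k -> 0 < mu -> 0 <= y -> ex_RInt (rhs_integrand d k mu) 0 y.
Proof.
  intros. apply (ex_RInt_continuous (V:=R_CompleteNormedModule)). intros z Hz.
  rewrite Rmin_left in Hz by lra. apply rhs_cont; lra.
Qed.

Lemma G_deriv d k mu x : 0 <= k -> 0 < mu -> 0 < x ->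
  is_derive (fun y => RInt (rhs_integrand d k mu) 0 y) x (rhs_integrand d k mu x).
Proof.
  intros. apply (is_derive_RInt (V:=R_CompleteNormedModule) _ _ 0).
  - exists (mkposreal x H1). intros y Hy.
    assert (0 < y).
    { unfold ball in Hy; simpl in Hy; unfold AbsRing_ball, abs, minus, plus, opp in Hy; simpl in Hy.
      apply Rabs_def2 in Hy. lra. }
    apply RInt_correct, G_ex; lra.
  - apply rhs_cont; lra.
Qed.

Definition Pphi d kappa l lambda k mu phib := INR d * (INR d - 1) / (kappa ^ 2 * l ^ 2) * mu
  + k * ((INR d - 1) ^ 2 / (4 * l ^ 2)) * phib ^ 2
  + lambda * Rpower phib (2 * (INR d + 1) / (INR d - 1)).

Lemma INR_d_ge2 d : (2 <= d)%nat -> 2 <= INR d.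
Proof. intros. replace 2 with (INR 2) by apply INR2. apply le_INR; lia. Qed.

Lemma A_pos d kappa l mu : (2<=d)%nat -> 0<kappa -> 0<l -> 0<mu ->
  0 < INR d * (INR d - 1) / (kappa ^ 2 * l ^ 2) * mu.
Proof. intros. pose proof (INR_d_ge2 d H). pos. Qed.

Lemma P_ge_A d kappa l lambda k mu phib : (2<=d)%nat -> 0<kappa -> 0<l -> 0<lambda -> 0<=k -> 0<mu ->
  INR d * (INR d - 1) / (kappa ^ 2 * l ^ 2) * mu <= Pphi d kappa l lambda k mu phib.
Proof.
  intros. unfold Pphi. pose proof (INR_d_ge2 d H).
  assert (0 <= k * ((INR d - 1) ^ 2 / (4 * l ^ 2)) * phib ^ 2).
  { apply Rmult_le_pos; [apply Rmult_le_pos; [lra|] | apply pow2_ge_0].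
    apply Rlt_le; pos. }
  assert (0 < Rpower phib (2 * (INR d + 1) / (INR d - 1))) by (unfold Rpower; apply exp_pos).
  nra.
Qed.

Lemma P_pos d kappa l lambda k mu phib : (2<=d)%nat -> 0<kappa -> 0<l -> 0<lambda -> 0<=k -> 0<mu ->
  0 < Pphi d kappa l lambda k mu phib.
Proof.
  intros. eapply Rlt_le_trans; [apply A_pos|apply P_ge_A]; eauto.
Qed.

Lemma lhs_eq d kappa l lambda k mu phib :
  lhs_integrand d kappa l lambda k mu phib = / sqrt (Pphi d kappa l lambda k mu phib).
Proof. reflexivity. Qed.

Lemma lhs_cont d kappa l lambda k mu x : (2<=d)%nat -> 0<kappa -> 0<l -> 0<lambda -> 0<=k -> 0<mu ->
  0 < x -> continuous (lhs_integrand d kappa l lambda k mu) x.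
Proof.
  intros.
  pose proof (P_pos d kappa l lambda k mu x H H0 H1 H2 H3 H4) as HP.
  assert (ex_derive (lhs_integrand d kappa l lambda k mu) x) as H6; [|exact (ex_derive_continuous _ _ H6)].
  unfold lhs_integrand, Rpower. unfold Pphi, Rpower in HP.
  auto_derive. repeat split; auto.
  all: try exact HP.
  all: apply Rgt_not_eq, sqrt_lt_R0; exact HP.
Qed.

Lemma lhs_ex d kappa l lambda k mu a b : (2<=d)%nat -> 0<kappa -> 0<l -> 0<lambda -> 0<=k -> 0<mu ->
  0 < a -> 0 < b -> ex_RInt (lhs_integrand d kappa l lambda k mu) a b.
Proof.
  intros. apply (ex_RInt_continuous (V:=R_CompleteNormedModule)). intros z Hz.
  apply lhs_cont; auto. assert (0 < Rmin a b) by (apply Rmin_glb_lt; auto). lra.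
Qed.

Lemma F_deriv d kappa l lambda k mu x phio : (2<=d)%nat -> 0<kappa -> 0<l -> 0<lambda -> 0<=k -> 0<mu ->
  0 < x -> 0 < phio ->
  is_derive (fun y => RInt (lhs_integrand d kappa l lambda k mu) y phio) x
     (opp (lhs_integrand d kappa l lambda k mu x)).
Proof.
  intros. apply (is_derive_RInt' (V:=R_CompleteNormedModule) _ _ _ phio).
  - exists (mkposreal x H5). intros y Hy.
    assert (0 < y).
    { unfold ball in Hy; simpl in Hy; unfold AbsRing_ball, abs, minus, plus, opp in Hy; simpl in Hy.
      apply Rabs_def2 in Hy. lra. }
    apply RInt_correct, lhs_ex; auto.
  - apply lhs_cont; auto.
Qed.

Definition qd d := 2/(INR d - 1).
Definition sd d kappa := ln (4*INR d/((INR d - 1)*kappa^2))/2.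
Definition vf d kappa phib := exp (qd d * sd d kappa - qd d * ln phib).

Lemma v_deriv d kappa x : 0 < x -> is_derive (vf d kappa) x (vf d kappa x * (- qd d / x)).
Proof.
  intros. unfold vf. auto_derive; auto. unfold Rminus, Rdiv. ring.
Qed.

Lemma key_pt d kappa l lambda k mu x : (2<=d)%nat -> 0<kappa -> 0<l -> 0<lambda -> 0<=k -> 0<mu ->
  lambda_crit d kappa l <= lambda -> 0 < x ->
  lhs_integrand d kappa l lambda k mu x <=
  l * (vf d kappa x * (qd d / x)) * rhs_integrand d k mu (vf d kappa x).
Proof.
  intros Hd Hk Hl Hla Hk0 Hmu Hc Hx.
  pose proof (key_alg d kappa l lambda k mu x Hd Hk Hl Hk0 Hmu Hc Hx) as K. cbv zeta in K.
  fold (qd d) in K. fold (sd d kappa) in K. fold (vf d kappa x) in K.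
  fold (Pphi d kappa l lambda k mu x) in K.
  rewrite lhs_eq. unfold rhs_integrand.
  set (v := vf d kappa x) in *. set (q := qd d) in *.
  set (P := Pphi d kappa l lambda k mu x) in *.
  set (Q := 1 + k * v ^ 2 + mu * v ^ (d + 1)) in *.
  assert (HP : 0 < P) by (apply P_pos; auto).
  assert (HQ : 0 < Q) by (apply Q_pos; auto; apply Rlt_le, exp_pos).
  assert (Hv : 0 < v) by apply exp_pos.
  assert (Hq : 0 < q) by (unfold q, qd; pose proof (INR_d_ge2 d Hd); pos).
  pose proof (sqrt_lt_R0 P HP) as SP. pose proof (sqrt_lt_R0 Q HQ) as SQ.
  pose proof (sqrt_sqrt P (Rlt_le _ _ HP)) as SP2. pose proof (sqrt_sqrt Q (Rlt_le _ _ HQ)) as SQ2.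
  clearbody v q P Q.
  assert (HXY : x * sqrt Q <= l*q*v*sqrt P).
  { assert (0 <= l*q*v*sqrt P) by (apply Rlt_le; repeat apply Rmult_lt_0_compat; lra).
    assert (0 <= x * sqrt Q) by (apply Rlt_le; repeat apply Rmult_lt_0_compat; lra).
    assert ((x*sqrt Q)^2 <= (l*q*v*sqrt P)^2).
    { replace ((x*sqrt Q)^2) with (x^2 * (sqrt Q * sqrt Q)) by ring.
      replace ((l*q*v*sqrt P)^2) with ((l*q*v)^2 * (sqrt P * sqrt P)) by ring.
      rewrite SP2, SQ2. exact K. }
    nra. }
  apply (Rmult_le_reg_r (sqrt P * sqrt Q * x)); [repeat apply Rmult_lt_0_compat; lra|].
  replace (/ sqrt P * (sqrt P * sqrt Q * x)) with (x * sqrt Q) by (field; lra).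
  replace (l * (v * (q / x)) * / sqrt Q * (sqrt P * sqrt Q * x)) with (l*q*v*sqrt P) by (field; lra).
  exact HXY.
Qed.

Lemma K_mono d kappa l lambda k mu p1 phio : (2<=d)%nat -> 0<kappa -> 0<l -> 0<lambda -> 0<=k -> 0<mu ->
  lambda_crit d kappa l <= lambda -> 0 < p1 -> p1 <= phio ->
  RInt (lhs_integrand d kappa l lambda k mu) p1 phio <=
  l * RInt (rhs_integrand d k mu) 0 (vf d kappa p1) - l * RInt (rhs_integrand d k mu) 0 (vf d kappa phio).
Proof.
  intros Hd Hk Hl Hla Hk0 Hmu Hc Hp1 Hle.
  set (G := fun y => RInt (rhs_integrand d k mu) 0 y).
  set (F := fun y => RInt (lhs_integrand d kappa l lambda k mu) y phio).
  set (Kf := fun y => l * G (vf d kappa y) - F y).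
  set (df := fun y => l * (vf d kappa y * (- qd d / y) * rhs_integrand d k mu (vf d kappa y))
                      + lhs_integrand d kappa l lambda k mu y).
  assert (HK : forall y, 0 < y -> is_derive Kf y (df y)).
  { intros y Hy.
    assert (H1 : is_derive (fun z => G (vf d kappa z)) y
                  (vf d kappa y * (- qd d / y) * rhs_integrand d k mu (vf d kappa y))).
    { apply (is_derive_comp G (vf d kappa)).
      - apply G_deriv; auto. apply exp_pos.
      - apply v_deriv; auto. }
    assert (H2 := F_deriv d kappa l lambda k mu y phio Hd Hk Hl Hla Hk0 Hmu Hy (Rlt_le_trans _ _ _ Hp1 Hle)).
    fold F in H2.
    assert (H3 := is_derive_scal _ _ l _ H1).
    assert (H4 := is_derive_minus _ _ _ _ _ H3 H2).
    replace (df y) with (minus (l * (vf d kappa y * (- qd d / y) * rhs_integrand d k mu (vf d kappa y)))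
       (opp (lhs_integrand d kappa l lambda k mu y))).
    2:{ unfold df, minus, plus, opp; simpl. ring. }
    eapply is_derive_ext; [|exact H4].
    intros t. unfold Kf, F, minus, plus, opp; simpl. ring. }
  assert (Hdf : forall y, 0 < y -> df y <= 0).
  { intros y Hy. pose proof (key_pt d kappa l lambda k mu y Hd Hk Hl Hla Hk0 Hmu Hc Hy).
    unfold df.
    replace (l * (vf d kappa y * (- qd d / y) * rhs_integrand d k mu (vf d kappa y)))
      with (- (l * (vf d kappa y * (qd d / y)) * rhs_integrand d k mu (vf d kappa y))) by (field; lra).
    lra. }
  destruct (MVT_gen Kf p1 phio df) as [c [Hc1 Hc2]].
  - intros x Hx. rewrite Rmin_left, Rmax_right in Hx by lra. apply HK.
    lra.
  - intros x Hx. rewrite Rmin_left, Rmax_right in Hx by lra.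
    apply continuity_pt_filterlim. apply (ex_derive_continuous (K:=R_AbsRing) (V:=R_NormedModule)).
    eexists. apply HK. lra.
  - rewrite Rmin_left, Rmax_right in Hc1 by lra.
    assert (df c <= 0) by (apply Hdf; lra).
    assert (HH : Kf phio - Kf p1 <= 0) by (rewrite Hc2; nra).
    unfold Kf, F, G in *. rewrite RInt_point in HH. unfold zero in HH; simpl in HH. lra.
Qed.

Theorem mainTheorem11 (d : nat) (kappa l lambda k mu phio : R) (phi : R -> R) :
  (2 <= d)%nat ->
  0 < kappa -> 0 < l -> 0 < lambda ->
  (k = 0 \/ k = 1) ->
  0 < mu -> 0 < phio ->
  (* phi : [0,oo) -> (0,oo) continuous *)
  (forall u, 0 <= u -> 0 < phi u) ->
  (forall u, 0 <= u ->
     filterlim phi (within (fun x => 0 <= x) (locally u)) (locally (phi u))) ->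
  phi 0 = phio ->
  is_lim phi p_infty 0 ->
  (forall u, 0 <= u ->
     RInt (lhs_integrand d kappa l lambda k mu) phio (phi u)
     = - l * RInt (rhs_integrand d k mu) 0 u) ->
  lambda < lambda_crit d kappa l.
Proof.
  intros Hd Hk Hl Hla Hkk Hmu Hpo Hphi _ _ _ Heq.
  destruct (Rlt_or_le lambda (lambda_crit d kappa l)) as [|Hc]; [assumption| exfalso].
  assert (Hk0 : 0 <= k) by (destruct Hkk; lra).
  set (G := fun y => RInt (rhs_integrand d k mu) 0 y).
  set (f := lhs_integrand d kappa l lambda k mu).
  set (A := INR d * (INR d - 1) / (kappa ^ 2 * l ^ 2) * mu).
  assert (HA : 0 < A) by (apply A_pos; auto).
  assert (HsA : 0 < sqrt A) by (apply sqrt_lt_R0; auto).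
  assert (Hsw : forall u, 0 <= u -> phi u <= phio -> RInt f (phi u) phio = l * G u).
  { intros u Hu Hle. rewrite <- opp_RInt_swap.
    - unfold f. rewrite Heq by auto. unfold G, opp; simpl. ring.
    - apply lhs_ex; auto. }
  assert (Hneg : forall u, 0 <= u -> phio < phi u -> G u <= 0).
  { intros u Hu Hlt. pose proof (Heq u Hu).
    assert (0 <= RInt f phio (phi u)).
    { apply RInt_ge_0; [lra| apply lhs_ex; auto; apply Hphi; auto|].
      intros x Hx. unfold f. rewrite lhs_eq. apply Rlt_le, Rinv_0_lt_compat, sqrt_lt_R0, P_pos; auto. }
    unfold f in H0. rewrite H in H0. fold (G u) in H0. nra. }
  set (M := phio * / sqrt A / l).
  assert (Hbound : forall u, 0 <= u -> G u <= M).
  { intros u Hu. destruct (Rle_or_lt (phi u) phio) as [Hle|Hlt].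
    - pose proof (Hsw u Hu Hle) as E.
      assert (RInt f (phi u) phio <= RInt (fun _ => / sqrt A) (phi u) phio).
      { apply RInt_le; auto. apply lhs_ex; auto. apply ex_RInt_const.
        intros x Hx. unfold f. rewrite lhs_eq. apply Rinv_le_contravar; auto.
        apply sqrt_le_1_alt. apply P_ge_A; auto. }
      rewrite RInt_const in H. unfold scal in H; simpl in H; unfold mult in H; simpl in H.
      rewrite E in H. pose proof (Hphi u Hu).
      assert (0 < / sqrt A) by (apply Rinv_0_lt_compat; auto).
      unfold M. apply (Rmult_le_reg_l l); auto.
      replace (l * (phio * / sqrt A / l)) with (phio * / sqrt A) by (field; lra).
      nra.
    - pose proof (Hneg u Hu Hlt).
      assert (0 < M) by (unfold M; apply Rdiv_lt_0_compat; auto; apply Rmult_lt_0_compat; auto; apply Rinv_0_lt_compat; auto).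
      lra. }
  set (v0 := vf d kappa phio).
  assert (Hv0 : 0 < v0) by apply exp_pos.
  assert (HG0 : 0 < G v0).
  { unfold G. apply RInt_gt_0; auto.
    - intros x Hx. apply rhs_gt0; auto; lra.
    - intros x Hx. apply rhs_cont; auto; lra. }
  assert (Hstep : forall u, 0 <= u -> exists w, 0 <= w /\ G u + G v0 <= G w).
  { intros u Hu. destruct (Rle_or_lt (phi u) phio) as [Hle|Hlt].
    - exists (vf d kappa (phi u)). split; [apply Rlt_le, exp_pos|].
      pose proof (K_mono d kappa l lambda k mu (phi u) phio Hd Hk Hl Hla Hk0 Hmu Hc (Hphi u Hu) Hle) as KM.
      fold f in KM. rewrite (Hsw u Hu Hle) in KM. fold (G (vf d kappa (phi u))) in KM.
      fold v0 in KM. fold (G v0) in KM.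
      apply (Rmult_le_reg_l l); auto. lra.
    - exists v0. split; [lra|]. pose proof (Hneg u Hu Hlt). lra. }
  assert (Hit : forall n, exists w, 0 <= w /\ INR n * G v0 <= G w).
  { induction n as [|n IH].
    - exists 0. split; [lra|]. unfold G. rewrite RInt_point. unfold zero; simpl. lra.
    - destruct IH as [w [Hw Hw2]]. destruct (Hstep w Hw) as [w' [Hw' Hw'2]].
      exists w'. split; auto. rewrite S_INR. lra. }
  destruct (INR_archimed (G v0) M HG0) as [n Hn].
  destruct (Hit n) as [w [Hw Hw2]].
  pose proof (Hbound w Hw). lra.
Qed.
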